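(* Let $l\ge2$ and $m_1,\dots,m_l\ge3$ be integers. The join $C_{m_1}*\dots*C_{m_l}$ of cycles is (isomorphic to) a circulant graph if and only if $m_1=\dots=m_l=m$ for some $m\ge3$. In that case $C_m*\dots*C_m$ ($l$ copies) is isomorphic to $C_{lm}(S)$ where $S=\{s\in\{1,\dots,\lfloor lm/2\rfloor\}: s=l \text{ or } l\nmid s\}$ (i.e. $\{1,\dots,\lfloor lm/2\rfloor\}$ with $2l,3l,\dots$ removed); explicitly, the induced subgraphs on $V_i=\{i,l+i,\dots,(m-1)l+i\}$, $0\le i<l$, are $m$-cycles and all edges between distinct $V_i$ are present.
   Context: $C_m$ is the cycle of length $m$. The circulant graph $C_n(S)$ ($S\subseteq\{1,\dots,\lfloor n/2\rfloor\}$) has vertex set $\{0,\dots,n-1\}$ with $\{a,b\}$ an edge iff $\min(|a-b|,n-|a-b|)\in S$. The join $G*H$ of graphs with disjoint vertex sets has all edges of $G$, of $H$, and all pairs $\{x,y\}$ with $x\in V(G)$, $y\in V(H)$. *)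

(* Defs.v *)
From mathcomp Require Import all_boot.
Set Implicit Arguments. Unset Strict Implicit. Unset Printing Implicit Defensive.

Definition graph_iso (V W : finType) (e : rel V) (f : rel W) (g : V -> W) :=
  bijective g /\ forall x y, f (g x) (g y) = e x y.

Definition isomorphic (V W : finType) (e : rel V) (f : rel W) :=
  exists g : V -> W, graph_iso e f g.

Definition cycle_adj (n x y : nat) : bool :=
  (y == x.+1 %% n) || (x == y.+1 %% n).

Definition circ_dist (n a b : nat) : nat :=
  let d := maxn a b - minn a b in minn d (n - d).

Definition circ_adj (n : nat) (S : pred nat) : rel 'I_n :=
  fun a b => S (circ_dist n a b).

(* Join C_{m_0} * ... * C_{m_{l-1}}: vertex (i,k) is vertex k of the i-th cycle;
   edges inside a copy are cycle edges, and all pairs in distinct copies are edges. *)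
Definition join_cycles_adj (l : nat) (m : 'I_l -> nat) :
  rel {i : 'I_l & 'I_(m i)} :=
  fun u v => if tag u == tag v then cycle_adj (m (tag u)) (tagged u) (tagged v)
             else true.

Definition join_conn_set (l m0 : nat) : pred nat :=
  fun s => (1 <= s <= (l * m0)./2) && ((s == l) || ~~ (l %| s)).

Arguments join_cycles_adj {l} m.
Arguments circ_adj : clear implicits.

(* Main.v *)
Require Import Defs.
From mathcomp Require Import all_boot.
From mathcomp Require zify all_order.

Module Helpers.
Import zify.

Lemma mod2 x n : x < n + n -> x %% n = if x < n then x else x - n.
Proof.
move=> h; case: ltnP => h2; first by rewrite modn_small.
have -> : x = (x - n) + n by lia.
rewrite modnDr modn_small; lia.
Qed.

Lemma cycle_adj_t m0 k k' : 3 <= m0 -> k < m0 -> k' < m0 ->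
  cycle_adj m0 k k' = (minn (maxn k k' - minn k k') (m0 - (maxn k k' - minn k k')) == 1).
Proof.
move=> h3 hk hk'; rewrite /cycle_adj.
rewrite (@mod2 k.+1 m0) ?(@mod2 k'.+1 m0); try lia.
case: (ltnP k.+1 m0); case: (ltnP k'.+1 m0) => *; apply/idP/idP; lia.
Qed.

Lemma cd_bound n a b : a < n -> b < n -> circ_dist n a b <= n./2.
Proof. rewrite /circ_dist => *; lia. Qed.

Lemma cd_pos n a b : a < n -> b < n -> a != b -> 1 <= circ_dist n a b.
Proof. rewrite /circ_dist => *; lia. Qed.

Lemma edge_eq l m0 i j k k' : 2 <= l -> 3 <= m0 -> i < l -> j < l -> k < m0 -> k' < m0 ->
  join_conn_set l m0 (circ_dist (l*m0) (k*l+i) (k'*l+j)) =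
  (if i == j then cycle_adj m0 k k' else true).
Proof.
move=> hl hm hi hj hk hk'.
have ha : k*l+i < l*m0 by nia.
have hb : k'*l+j < l*m0 by nia.
have bnd := @cd_bound _ _ _ ha hb.
rewrite /join_conn_set.
case: (eqVneq i j) => [eij|hij]; first subst j; rewrite ?eqxx.
  rewrite cycle_adj_t //.
  set e := maxn k k' - minn k k'.
  have -> : circ_dist (l*m0) (k*l+i) (k'*l+i) = minn e (m0 - e) * l.
    rewrite /circ_dist /e; case: (leqP k k') => hkk.
    - have h1 : k*l+i <= k'*l+i by nia.
      have -> : maxn (k * l + i) (k' * l + i) - minn (k * l + i) (k' * l + i) = (k'-k)*l.
        rewrite (maxn_idPr h1) (minn_idPl h1) mulnBl; lia.
      by rewrite [l*m0]mulnC -mulnBl minnMl.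
    - have h1 : k'*l+i <= k*l+i by nia.
      have hkk' : k' <= k by lia.
      have -> : maxn (k * l + i) (k' * l + i) - minn (k * l + i) (k' * l + i) = (k-k')*l.
        rewrite (maxn_idPl h1) (minn_idPr h1) mulnBl; lia.
      by rewrite [l*m0]mulnC -mulnBl minnMl.
  set t := minn e (m0 - e).
  rewrite dvdn_mull ?dvdnn // orbF.
  case: (eqVneq t 1) => ht.
    rewrite ht mul1n eqxx andbT; apply/andP; split; first lia.
    have : l * 2 <= l * m0 by rewrite leq_mul2l; apply/orP; right; lia.
    lia.
  have -> : (t * l == l) = false by apply/eqP; nia.
  by rewrite andbF.
have hne : k * l + i != k' * l + j.
  apply/eqP => /(congr1 (modn^~ l)); rewrite !modnMDl !modn_small //; exact/eqP.
rewrite (@cd_pos _ _ _ ha hb hne) bnd /=.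
apply/orP; right.
have hdn : maxn (k*l+i) (k'*l+j) - minn (k*l+i) (k'*l+j) <= l*m0 by lia.
suff hd : ~~ (l %| maxn (k*l+i) (k'*l+j) - minn (k*l+i) (k'*l+j)).
  rewrite /circ_dist /=; move: hd hdn; set d := maxn _ _ - minn _ _ => hd hdn.
  case: (leqP d (l * m0 - d)) => hh.
  - by [].
  - apply: contra hd => hd.
    have := dvdn_sub (dvdn_mulr m0 (dvdnn l)) hd.
    by rewrite subKn.
have hmod : forall x y, x = y %[mod l] -> x %% l = y %% l by [].
case: (leqP (k'*l+j) (k*l+i)) => hh.
- rewrite -eqn_mod_dvd // modnMDl modnMDl !modn_small //.
- have hh2 := ltnW hh; rewrite -eqn_mod_dvd // modnMDl modnMDl !modn_small //.
  by rewrite eq_sym.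
Qed.

Lemma part2 (l : nat) (m : 'I_l -> nat) :
  2 <= l -> (forall i, 3 <= m i) ->
  (forall m0, (forall i, m i = m0) ->
     exists g : {i : 'I_l & 'I_(m i)} -> 'I_(l * m0),
       graph_iso (join_cycles_adj m) (circ_adj (l * m0) (join_conn_set l m0)) g /\
       forall v, val (g v) = val (tagged v) * l + val (tag v)).
Proof.
move=> hl hm m0 hm0.
have hm3 : 3 <= m0 by rewrite -(hm0 (Ordinal (ltnW hl))).
have hlt : forall v : {i : 'I_l & 'I_(m i)}, tagged v * l + tag v < l * m0.
  move=> [i k] /=; have hk : val k < m0 by rewrite -(hm0 i) ltn_ord.
  have := ltn_ord i => hi.
  have : k.+1 * l <= m0 * l by rewrite leq_mul2r hk orbT.
  rewrite mulSn [l * m0]mulnC; lia.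
exists (fun v => Ordinal (hlt v)); split; last by [].
have inj : injective (fun v => Ordinal (hlt v)).
  move=> [i k] [j k'] /(congr1 val) /= h.
  have hi := ltn_ord i; have hj := ltn_ord j.
  have eij : val i = val j.
    by move/(congr1 (modn^~ l)): h; rewrite /= !modnMDl !modn_small.
  have ei : i = j by apply: val_inj.
  subst j.
  have ekk : val k = val k'.
    have : k * l == k' * l by apply/eqP; lia.
    by rewrite eqn_pmul2r ?(ltnW hl) // => /eqP.
  by rewrite (val_inj ekk).
split.
  apply: inj_card_bij => //.
  rewrite card_ord order.tagnat.card.
  under eq_bigr => i _ do rewrite hm0.
  by rewrite sum_nat_const card_ord mulnC.
move=> [i k] [j k'].
rewrite /circ_adj /join_cycles_adj /=.
have hk : val k < m0 by rewrite -(hm0 i) ltn_ord.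
have hk' : val k' < m0 by rewrite -(hm0 j) ltn_ord.
have E : forall x y, cycle_adj (m i) x y = cycle_adj m0 x y by move=> x y; rewrite hm0.
rewrite edge_eq // -val_eqE /=.
by case: eqP => // _; rewrite E.
Qed.

Lemma card_bij (T T' : finType) (h : T -> T') (P : pred T') :
  bijective h -> #|[pred b | P b]| = #|[pred x | P (h x)]|.
Proof.
move=> hb; have hi := bij_inj hb; case: hb => h' c1 c2.
rewrite -(card_image hi); apply: eq_card => b; rewrite !inE.
apply/idP/idP => [Pb | /imageP [x hx ->]] //.
by rewrite -(c2 b) mem_image // inE c2.
Qed.

Lemma iso_deg (V W : finType) (e : rel V) (f : rel W) g :
  graph_iso e f g -> forall v, #|[pred w | e v w]| = #|[pred b | f (g v) b]|.
Proof.
move=> [hb hf] v; rewrite (@card_bij _ _ _ (f (g v)) hb).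
by apply: eq_card => w; rewrite !inE hf.
Qed.

Lemma circ_shift n a x : a < n -> x < n ->
  circ_dist n a ((x + a) %% n) = circ_dist n 0 x.
Proof.
move=> ha hx; rewrite (@mod2 (x + a) n); last lia.
rewrite /circ_dist /=; case: ltnP => h. all: lia.
Qed.

Lemma circ_reg n S (a z : 'I_n) : val z = 0 ->
  #|[pred b | circ_adj n S a b]| = #|[pred b | circ_adj n S z b]|.
Proof.
move=> hz.
have hn : 0 < n by have := ltn_ord a; lia.
pose sh (x : 'I_n) : 'I_n := Ordinal (ltn_pmod (x + a) hn).
have inj : injective sh.
  move=> x y /(congr1 val) /=.
  have := ltn_ord x; have := ltn_ord y; have := ltn_ord a => h1 h2 h3.
  rewrite (@mod2 (x + a) n) ?(@mod2 (y + a) n); try lia.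
  move=> h; apply: val_inj; move: h; case: ltnP => ? /=; case: ltnP => ? /=; lia.
rewrite (@card_bij _ _ _ _ (injF_bij inj)); apply: eq_card => x; rewrite !inE.
by rewrite /circ_adj /= circ_shift // hz.
Qed.

Lemma cyc_nbr M : 3 <= M -> #|[pred k' : 'I_M | cycle_adj M 0 k']| = 2.
Proof.
move=> hM.
have h1 : 1 < M by lia.
have h2 : M.-1 < M by lia.
have -> : 2 = #|[set Ordinal h1; Ordinal h2]|.
  rewrite cards2 -val_eqE /=.
  by have -> : (1 == M.-1) = false by apply/eqP; lia.
apply: eq_card => k; rewrite !inE -!val_eqE /= /cycle_adj.
have hk := ltn_ord k.
rewrite (modn_small h1) (@mod2 k.+1 M); last lia.
case: ltnP => ? /=; apply/idP/idP; lia.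
Qed.

Lemma join_deg l (m : 'I_l -> nat) i (k0 : 'I_(m i)) : val k0 = 0 -> 3 <= m i ->
  #|[pred w | join_cycles_adj m (Tagged (fun j => 'I_(m j)) k0) w]| + (m i - 2)
  = #|{: {j : 'I_l & 'I_(m j)}}|.
Proof.
move=> hk0 hm.
rewrite -(cardC [pred w | join_cycles_adj m (Tagged (fun j => 'I_(m j)) k0) w]).
congr (_ + _).
have inj : injective (fun k : 'I_(m i) => Tagged (fun j => 'I_(m j)) k).
  by move=> x y; apply: eq_from_Tagged.
have hc := cardC [pred k' : 'I_(m i) | cycle_adj (m i) 0 k'].
rewrite cyc_nbr // card_ord in hc.
have -> : m i - 2 = #|[predC [pred k' : 'I_(m i) | cycle_adj (m i) 0 k']]| by rewrite -[in LHS]hc addKn.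
rewrite -(card_image inj); apply: eq_card => w; rewrite !inE.
apply/idP/idP.
- move=> /imageP [k' hk' ->]; move: hk'; rewrite !inE /join_cycles_adj /= eqxx hk0.
  by [].
- case: w => j k'; rewrite /join_cycles_adj /=.
  case: (eqVneq i j) => [eij|nij] /=; last by [].
  subst j => hn.
  by rewrite mem_image // inE -hk0.
Qed.

End Helpers.

Theorem lemma4p1 (l : nat) (m : 'I_l -> nat) :
  2 <= l -> (forall i, 3 <= m i) ->
  ((exists (n : nat) (S : pred nat),
       (forall s, S s -> 1 <= s <= n./2) /\
       isomorphic (join_cycles_adj m) (circ_adj n S))
   <-> (exists m0, 3 <= m0 /\ forall i, m i = m0))
  /\
  (forall m0, (forall i, m i = m0) ->
     exists g : {i : 'I_l & 'I_(m i)} -> 'I_(l * m0),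
       graph_iso (join_cycles_adj m) (circ_adj (l * m0) (join_conn_set l m0)) g /\
       forall v, val (g v) = val (tagged v) * l + val (tag v)).
Proof.
move=> hl hm.
have P2 := @Helpers.part2 l m hl hm.
split; last exact: P2.
split.
- move=> [n [S [_ [g hg]]]].
  have hl0 : 0 < l by apply: ltnW.
  pose i0 : 'I_l := Ordinal hl0.
  exists (m i0); split; first exact: hm.
  pose u (i : 'I_l) := Tagged (fun j => 'I_(m j)) (Ordinal (leq_trans (isT : 0 < 3) (hm i))).
  have key : forall i : 'I_l, #|[pred w | join_cycles_adj m (u i) w]| = #|[pred b | circ_adj n S (g (u i0)) b]|.
    move=> i; rewrite (@Helpers.iso_deg _ _ _ _ _ hg).
    set a := g _; set b := g _.
    have hz : 0 < n := leq_ltn_trans (leq0n a) (ltn_ord a).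
    by rewrite (@Helpers.circ_reg n S a (Ordinal hz)) // (@Helpers.circ_reg n S b (Ordinal hz)).
  move=> i.
  have e1 := @Helpers.join_deg l m i (Ordinal (leq_trans (isT : 0 < 3) (hm i))) erefl (hm i).
  have e2 := @Helpers.join_deg l m i0 (Ordinal (leq_trans (isT : 0 < 3) (hm i0))) erefl (hm i0).
  rewrite -/(u i) key in e1; rewrite -/(u i0) key in e2.
  have := hm i; have := hm i0.
  move: e1 e2; set A := #|[pred b | _]|; set N := #|_| => e1 e2 h1 h2.
  have e3 : m i - 2 = m i0 - 2 by apply/eqP; rewrite -(eqn_add2l A) e1 e2.
  have := congr1 (addn 2) e3; rewrite !subnKC //; exact: ltnW.
- move=> [m0 [hm3 hm0]].
  exists (l * m0), (join_conn_set l m0); split.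
    by move=> s /andP [].
  by have [g [hg _]] := P2 m0 hm0; exists g.
Qed.
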